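(* Every $x\in\mathscr X$ admits the continuous quadratic variation $\langle x\rangle_t=t$, $t\in[0,1]$, along the sequence of dyadic partitions $\mathbb T_n=\{k2^{-n}: k=0,\dots,2^n\}$, $n\ge1$.
   Context: The Faber--Schauder functions are $e_{0,0}(t):=(\min\{t,1-t\})^+$ and $e_{m,k}(t):=2^{-m/2}e_{0,0}(2^m t-k)$ for $t\in\mathbb R$, $m\ge1$, $k\in\mathbb Z$. $\mathscr X$ denotes the set of all functions $x\in C[0,1]$ of the form $x=\sum_{m=0}^\infty\sum_{k=0}^{2^m-1}\theta_{m,k}e_{m,k}$ (uniformly convergent series) with $\theta_{m,k}\in\{-1,+1\}$. For a partition $\mathbb T$ of $[0,1]$ and $t\in\mathbb T$, the successor $t'$ is $\min\{u\in\mathbb T:u>t\}$ if $t<1$ and $t'=1$ if $t=1$. For $x\in C[0,1]$ set $\langle x\rangle^n_t:=\sum_{s\in\mathbb T_n,\,s\le t}(x(s')-x(s))^2$. The function $x$ admits the continuous quadratic variation $\langle x\rangle$ along $(\mathbb T_n)$ if $\langle x\rangle_t:=\lim_{n\to\infty}\langle x\rangle^n_t$ exists for all $t\in[0,1]$ and $t\mapsto\langle x\rangle_t$ is continuous. *)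

(* Defs.v *)
From Stdlib Require Import Reals Lra.
From Coquelicot Require Import Coquelicot.
Open Scope R_scope.

Definition e00 (t : R) : R := Rmax 0 (Rmin t (1 - t)).

Definition schauder (m k : nat) (t : R) : R :=
  / sqrt (2 ^ m) * e00 (2 ^ m * t - INR k).

Definition schauder_partial (theta : nat -> nat -> R) (M : nat) (t : R) : R :=
  sum_f_R0 (fun m => sum_f_R0 (fun k => theta m k * schauder m k t) (2 ^ m - 1)%nat) M.

Definition continuous_on01 (f : R -> R) : Prop :=
  forall t, 0 <= t <= 1 -> forall eps, 0 < eps -> exists delta, 0 < delta /\
    forall s, 0 <= s <= 1 -> Rabs (s - t) < delta -> Rabs (f s - f t) < eps.

Definition in_X (x : R -> R) : Prop :=
  continuous_on01 x /\
  exists theta : nat -> nat -> R,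
    (forall m k, theta m k = 1 \/ theta m k = -1) /\
    (forall eps, 0 < eps -> exists N : nat, forall M : nat, (N <= M)%nat ->
       forall t, 0 <= t <= 1 -> Rabs (schauder_partial theta M t - x t) < eps).

(* A sequence of partitions of [0,1]: the n-th partition is
   {pts n 0 < pts n 1 < ... < pts n (card n)} with pts n 0 = 0, pts n (card n) = 1.
   The successor of pts n i is pts n (i+1) for i < card n, and 1 for i = card n. *)
Definition qv_n (pts : nat -> nat -> R) (card : nat -> nat) (x : R -> R)
  (n : nat) (t : R) : R :=
  sum_f_R0 (fun i =>
     if Rle_dec (pts n i) t
     then (x (pts n (Nat.min (S i) (card n))) - x (pts n i)) ^ 2
     else 0) (card n).

Definition has_cont_qv (pts : nat -> nat -> R) (card : nat -> nat)
  (x : R -> R) (q : R -> R) : Prop :=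
  (forall t, 0 <= t <= 1 -> is_lim_seq (fun n => qv_n pts card x n t) (q t)) /\
  continuous_on01 q.

Definition dyadic_pts (n k : nat) : R := INR k / 2 ^ n.
Definition dyadic_card (n : nat) : nat := (2 ^ n)%nat.

(* Main.v *)
Require Import Defs.
From Stdlib Require Import Reals Lra Lia Psatz ZArith.
From Coquelicot Require Import Coquelicot.
Open Scope R_scope.

Lemma e00_int (z : Z) : e00 (IZR z) = 0.
Proof.
  unfold e00, Rmax, Rmin.
  destruct (Z_le_gt_dec z 0) as [H|H].
  - apply IZR_le in H. repeat destruct Rle_dec; lra.
  - assert (H1 : (1 <= z)%Z) by lia. apply IZR_le in H1.
    repeat destruct Rle_dec; lra.
Qed.

Lemma e00_half (z : Z) : e00 (IZR z + /2) = if Z.eq_dec z 0 then /2 else 0.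
Proof.
  destruct (Z.eq_dec z 0) as [->|H].
  - unfold e00, Rmax, Rmin. repeat destruct Rle_dec; lra.
  - unfold e00, Rmax, Rmin.
    destruct (Z_le_gt_dec z 0) as [H1|H1].
    + assert (H2 : (z <= -1)%Z) by lia. apply IZR_le in H2.
      repeat destruct Rle_dec; lra.
    + assert (H2 : (1 <= z)%Z) by lia. apply IZR_le in H2.
      repeat destruct Rle_dec; lra.
Qed.

Lemma e00_aff_real (u v : R) : u <= v ->
  (v <= 0 \/ (0 <= u /\ v <= /2) \/ (/2 <= u /\ v <= 1) \/ 1 <= u) ->
  e00 ((u + v) / 2) = (e00 u + e00 v) / 2.
Proof.
  intros Huv H. unfold e00, Rmax, Rmin.
  repeat destruct Rle_dec; lra.
Qed.

Lemma e00_aff (z W : Z) : (1 <= W)%Z ->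
  e00 ((IZR z + /2) / (2 * IZR W)) =
  (e00 (IZR z / (2 * IZR W)) + e00 (IZR (z + 1) / (2 * IZR W))) / 2.
Proof.
  intros HW.
  assert (HWr : 1 <= IZR W) by (apply IZR_le; lia).
  set (s := 2 * IZR W).
  assert (Hs : 0 < s) by (unfold s; lra).
  replace ((IZR z + /2) / s) with ((IZR z / s + IZR (z+1) / s) / 2)
    by (rewrite plus_IZR; field; lra).
  apply e00_aff_real.
  - rewrite plus_IZR. unfold Rdiv. apply Rmult_le_compat_r.
    + left; apply Rinv_0_lt_compat; lra.
    + lra.
  - assert (Hd : forall a b : R, a <= b * s -> a / s <= b)
      by (intros a b Hab; apply Rle_div_l; lra).
    assert (Hd' : forall a b : R, b * s <= a -> b <= a / s).
    { intros a b Hab. apply Rle_div_r; lra. }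
    destruct (Z_le_gt_dec (z+1) 0) as [H|H].
    + left. apply Hd. apply IZR_le in H. lra.
    + destruct (Z_le_gt_dec (z+1) W) as [H2|H2].
      * right; left. split.
        -- apply Hd'. assert (0 <= z)%Z by lia. apply IZR_le in H0. lra.
        -- apply Hd. apply IZR_le in H2. unfold s. lra.
      * destruct (Z_le_gt_dec (z+1) (2*W)) as [H3|H3].
        -- right; right; left. split.
           ++ apply Hd'. assert (W <= z)%Z by lia. apply IZR_le in H0. unfold s. lra.
           ++ apply Hd. apply IZR_le in H3. rewrite mult_IZR in H3. unfold s. lra.
        -- right; right; right. apply Hd'. assert (2*W <= z)%Z by lia.
           apply IZR_le in H0. rewrite mult_IZR in H0. unfold s. lra.
Qed.
Definition Lv (th : nat -> nat -> R) (m : nat) (t : R) : R :=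
  sum_f_R0 (fun k => th m k * schauder m k t) (2 ^ m - 1)%nat.
Fixpoint Q (th : nat -> nat -> R) (n : nat) (t : R) : R :=
  match n with O => 0 | S n' => Q th n' t + Lv th n' t end.

Lemma partial_Q th M t : schauder_partial th M t = Q th (S M) t.
Proof.
  induction M as [|M IH].
  - unfold schauder_partial, Q, Lv. simpl. ring.
  - unfold schauder_partial in *. change (sum_f_R0 (fun m => sum_f_R0 (fun k => th m k * schauder m k t) (2 ^ m - 1)) M + sum_f_R0 (fun k => th (S M) k * schauder (S M) k t) (2 ^ (S M) - 1) = Q th (S (S M)) t).
    rewrite IH. reflexivity.
Qed.

Lemma sum_zero (f : nat -> R) N : (forall k, f k = 0) -> sum_f_R0 f N = 0.
Proof. intros H; induction N; simpl; rewrite ?IHN, H; ring. Qed.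

Lemma two_pow_pos n : 0 < 2 ^ n.
Proof. apply pow_lt; lra. Qed.

Lemma vanish m n k a : (n <= m)%nat -> schauder m k (INR a / 2 ^ n) = 0.
Proof.
  intros Hnm. unfold schauder.
  replace m with (n + (m - n))%nat by lia.
  set (p := (m - n)%nat).
  assert (Hn := two_pow_pos n).
  replace (2 ^ (n + p) * (INR a / 2 ^ n) - INR k) with
    (IZR (Z.of_nat a * 2 ^ Z.of_nat p - Z.of_nat k)).
  - rewrite e00_int. ring.
  - rewrite minus_IZR, mult_IZR, <- pow_IZR, <- !INR_IZR_INZ, pow_add.
    field. lra.
Qed.

Lemma Lv_vanish th m n a : (n <= m)%nat -> Lv th m (INR a / 2 ^ n) = 0.
Proof.
  intros H. unfold Lv. apply sum_zero. intros k. rewrite vanish; [ring|lia].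
Qed.

Lemma Q_stable th n a M : (n <= M)%nat -> Q th M (INR a / 2 ^ n) = Q th n (INR a / 2 ^ n).
Proof.
  induction M as [|M IH]; intros H.
  - replace n with 0%nat by lia. reflexivity.
  - destruct (Nat.eq_dec n (S M)) as [->|Hne]; [reflexivity|].
    simpl. rewrite IH by lia. rewrite Lv_vanish by lia. ring.
Qed.

Lemma dy_in01 n a : (a <= 2 ^ n)%nat -> 0 <= INR a / 2 ^ n <= 1.
Proof.
  intros H. assert (Hn := two_pow_pos n).
  apply le_INR in H. rewrite pow_INR in H. replace (INR 2) with 2 in H by (simpl; ring).
  split.
  - apply Rdiv_le_0_compat; [apply pos_INR|lra].
  - apply Rle_div_l; lra.
Qed.

Lemma x_eq_Q (x : R -> R) th n a :
  (forall eps, 0 < eps -> exists N : nat, forall M : nat, (N <= M)%nat ->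
       forall t, 0 <= t <= 1 -> Rabs (schauder_partial th M t - x t) < eps) ->
  (a <= 2 ^ n)%nat -> x (INR a / 2 ^ n) = Q th n (INR a / 2 ^ n).
Proof.
  intros Hu Ha.
  destruct (Req_dec (x (INR a / 2 ^ n)) (Q th n (INR a / 2 ^ n))) as [E|E]; [exact E|].
  exfalso.
  set (eps := Rabs (x (INR a / 2 ^ n) - Q th n (INR a / 2 ^ n))).
  assert (He : 0 < eps) by (apply Rabs_pos_lt; lra).
  destruct (Hu eps He) as [N HN].
  specialize (HN (Nat.max N n) (Nat.le_max_l _ _) _ (dy_in01 n a Ha)).
  rewrite partial_Q, Q_stable in HN by lia.
  unfold eps in HN. rewrite Rabs_minus_sym in HN. lra.
Qed.

Lemma sum_avg (f g h : nat -> R) N : (forall k, f k = (g k + h k) / 2) ->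
  sum_f_R0 f N = (sum_f_R0 g N + sum_f_R0 h N) / 2.
Proof. intros H; induction N; simpl; rewrite ?IHN, H; field. Qed.

Lemma sum_single (c : nat -> R) j N : (j <= N)%nat ->
  sum_f_R0 (fun k => if Nat.eq_dec k j then c k else 0) N = c j.
Proof.
  intros H. induction N as [|N IH].
  - replace j with 0%nat by lia. simpl. reflexivity.
  - change (sum_f_R0 ?f (S N)) with (sum_f_R0 f N + f (S N)). cbv beta.
    destruct (Nat.eq_dec (S N) j) as [E|E].
    + subst. rewrite (sum_eq _ (fun _ => 0)).
      * rewrite sum_zero by reflexivity. destruct (Nat.eq_dec (S N) (S N)); [ring|lia].
      * intros k Hk. destruct (Nat.eq_dec k (S N)); [lia|reflexivity].
    + rewrite IH; [|lia]. destruct (Nat.eq_dec (S N) j); [lia|ring].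
Qed.

Lemma schauder_aff m n k j : (m < n)%nat ->
  schauder m k (INR (2 * j + 1) / 2 ^ S n) =
  (schauder m k (INR j / 2 ^ n) + schauder m k (INR (S j) / 2 ^ n)) / 2.
Proof.
  intros Hmn. unfold schauder.
  replace n with (m + S (n - m - 1))%nat by lia.
  set (p := (n - m - 1)%nat).
  set (W := (2 ^ Z.of_nat p)%Z).
  set (z := (Z.of_nat j - Z.of_nat k * 2 * W)%Z).
  assert (HW : (1 <= W)%Z).
  { unfold W. assert (0 < 2 ^ Z.of_nat p)%Z by (apply Z.pow_pos_nonneg; lia). lia. }
  assert (HWr : IZR W = 2 ^ p) by (unfold W; rewrite <- pow_IZR; reflexivity).
  assert (Hm := two_pow_pos m). assert (Hp := two_pow_pos p).
  assert (E1 : 2 ^ (m + S p) = 2 ^ m * (2 * 2 ^ p)) by (rewrite pow_add; reflexivity).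
  assert (E2 : 2 ^ S (m + S p) = 2 ^ m * (2 * (2 * 2 ^ p))) by (change (2 ^ S (m + S p)) with (2 * 2 ^ (m + S p)); rewrite E1; ring).
  replace (2 ^ m * (INR (2 * j + 1) / 2 ^ S (m + S p)) - INR k)
    with ((IZR z + /2) / (2 * IZR W)).
  2:{ unfold z. rewrite minus_IZR, !mult_IZR, <- !INR_IZR_INZ, HWr.
      rewrite plus_INR, mult_INR. simpl (INR 2). simpl (INR 1).
      rewrite ?E1, ?E2. field. lra. }
  replace (2 ^ m * (INR j / 2 ^ (m + S p)) - INR k)
    with (IZR z / (2 * IZR W)).
  2:{ unfold z. rewrite minus_IZR, !mult_IZR, <- !INR_IZR_INZ, HWr.
      rewrite ?E1, ?E2. field. lra. }
  replace (2 ^ m * (INR (S j) / 2 ^ (m + S p)) - INR k)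
    with (IZR (z + 1) / (2 * IZR W)).
  2:{ unfold z. rewrite plus_IZR, minus_IZR, !mult_IZR, <- !INR_IZR_INZ, HWr.
      rewrite S_INR. rewrite pow_add. simpl pow. field. lra. }
  rewrite e00_aff by exact HW. field.
  apply Rgt_not_eq, sqrt_lt_R0; exact Hm.
Qed.

Lemma Lv_mid th n j : (j < 2 ^ n)%nat ->
  Lv th n (INR (2 * j + 1) / 2 ^ S n) = th n j / sqrt (2 ^ n) / 2.
Proof.
  intros Hj. unfold Lv.
  assert (Hn := two_pow_pos n).
  rewrite (sum_eq _ (fun k => if Nat.eq_dec k j then th n k / sqrt (2 ^ n) / 2 else 0)).
  - apply sum_single. lia.
  - intros k Hk. unfold schauder.
    replace (2 ^ n * (INR (2 * j + 1) / 2 ^ S n) - INR k)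
      with (IZR (Z.of_nat j - Z.of_nat k) + /2).
    2:{ rewrite minus_IZR, <- !INR_IZR_INZ, plus_INR, mult_INR.
        change (2 ^ S n) with (2 * 2 ^ n). simpl (INR 2). simpl (INR 1). field. lra. }
    rewrite e00_half.
    destruct (Z.eq_dec (Z.of_nat j - Z.of_nat k) 0) as [E|E];
    destruct (Nat.eq_dec k j) as [E'|E']; try lia; unfold Rdiv; ring.
Qed.

Lemma Lv_avg th m n j : (m < n)%nat ->
  Lv th m (INR (2 * j + 1) / 2 ^ S n) =
  (Lv th m (INR j / 2 ^ n) + Lv th m (INR (S j) / 2 ^ n)) / 2.
Proof.
  intros H. unfold Lv. apply sum_avg. intros k. rewrite schauder_aff by exact H. field.
Qed.

Lemma Q_avg th n j p : (p <= n)%nat ->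
  Q th p (INR (2 * j + 1) / 2 ^ S n) =
  (Q th p (INR j / 2 ^ n) + Q th p (INR (S j) / 2 ^ n)) / 2.
Proof.
  induction p as [|p IH]; intros H.
  - simpl. field.
  - change (Q th (S p) ?t) with (Q th p t + Lv th p t). rewrite IH by lia. rewrite (Lv_avg th p n j) by lia. field.
Qed.

Lemma x_mid (x : R -> R) th n j :
  (forall eps, 0 < eps -> exists N : nat, forall M : nat, (N <= M)%nat ->
       forall t, 0 <= t <= 1 -> Rabs (schauder_partial th M t - x t) < eps) ->
  (j < 2 ^ n)%nat ->
  x (INR (2 * j + 1) / 2 ^ S n) =
  (x (INR j / 2 ^ n) + x (INR (S j) / 2 ^ n)) / 2 + th n j / sqrt (2 ^ n) / 2.
Proof.
  intros Hu Hj.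
  rewrite (x_eq_Q x th (S n) (2 * j + 1)); [|exact Hu|simpl; lia].
  rewrite (x_eq_Q x th n j); [|exact Hu|lia].
  rewrite (x_eq_Q x th n (S j)); [|exact Hu|lia].
  change (Q th (S n) ?t) with (Q th n t + Lv th n t). rewrite Q_avg by lia. rewrite Lv_mid by exact Hj. ring.
Qed.

Definition dd (x : R -> R) n j := x (INR (S j) / 2 ^ n) - x (INR j / 2 ^ n).

Lemma dy_double n j : INR (2 * j) / 2 ^ S n = INR j / 2 ^ n.
Proof.
  assert (Hn := two_pow_pos n). rewrite mult_INR. change (2 ^ S n) with (2 * 2 ^ n).
  simpl (INR 2). field. lra.
Qed.

Definition MidH (x : R -> R) (c : nat -> nat -> R) := forall n j, (j < 2 ^ n)%nat ->
  x (INR (2 * j + 1) / 2 ^ S n) = (x (INR j / 2 ^ n) + x (INR (S j) / 2 ^ n)) / 2 + c n j.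

Lemma d_even x c n j : MidH x c -> (j < 2 ^ n)%nat -> dd x (S n) (2 * j) = dd x n j / 2 + c n j.
Proof.
  intros Hm Hj. unfold dd. replace (S (2 * j)) with (2 * j + 1)%nat by lia.
  rewrite Hm by exact Hj. rewrite dy_double. field.
Qed.

Lemma d_odd x c n j : MidH x c -> (j < 2 ^ n)%nat -> dd x (S n) (2 * j + 1) = dd x n j / 2 - c n j.
Proof.
  intros Hm Hj. unfold dd. replace (S (2 * j + 1)) with (2 * (S j))%nat by lia.
  rewrite Hm by exact Hj. rewrite dy_double. field.
Qed.

Lemma split2 j : exists i, j = (2 * i)%nat \/ j = (2 * i + 1)%nat.
Proof.
  exists (j / 2)%nat. pose proof (Nat.div_mod j 2 ltac:(lia)).
  pose proof (Nat.mod_upper_bound j 2 ltac:(lia)). lia.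
Qed.

Lemma d_bound x c K : MidH x c -> (forall n j, c n j ^ 2 = / (4 * 2 ^ n)) ->
  6 <= K -> dd x 0 0 ^ 2 <= K ->
  forall n j, (j < 2 ^ n)%nat -> dd x n j ^ 2 <= K / 2 ^ n.
Proof.
  intros Hm Hc HK H0 n. induction n as [|n IH]; intros j Hj.
  - simpl in Hj. replace j with 0%nat by lia. simpl. lra.
  - assert (Hn := two_pow_pos n).
    change (2 ^ S n) with (2 * 2 ^ n).
    assert (Hq : forall a b : R, (a + b) ^ 2 <= 3 / 2 * a ^ 2 + 3 * b ^ 2)
      by (intros a b; assert (0 <= (a - 2 * b) ^ 2) by apply pow2_ge_0; nra).
    destruct (split2 j) as [i [-> | ->]].
    + assert (Hi : (i < 2 ^ n)%nat) by (simpl in Hj; lia).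
      rewrite (d_even x c) by assumption.
      specialize (IH i Hi). specialize (Hc n i).
      pose proof (Hq (dd x n i / 2) (c n i)).
      assert (dd x n i ^ 2 * 2 ^ n <= K) by (apply Rle_div_r; [lra|exact IH]).
      rewrite <- Rle_div_r by lra.
      replace (c n i ^ 2) with (/ (4 * 2 ^ n)) in * by (symmetry; exact Hc).
      assert (/ (4 * 2 ^ n) * 2 ^ n = / 4) by (field; lra).
      nra.
    + assert (Hi : (i < 2 ^ n)%nat) by (simpl in Hj; lia).
      rewrite (d_odd x c) by assumption.
      specialize (IH i Hi). specialize (Hc n i).
      pose proof (Hq (dd x n i / 2) (- c n i)).
      assert (dd x n i ^ 2 * 2 ^ n <= K) by (apply Rle_div_r; [lra|exact IH]).
      rewrite <- Rle_div_r by lra.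
      replace ((- c n i) ^ 2) with (c n i ^ 2) in * by ring.
      replace (c n i ^ 2) with (/ (4 * 2 ^ n)) in * by (symmetry; exact Hc).
      assert (/ (4 * 2 ^ n) * 2 ^ n = / 4) by (field; lra).
      unfold Rminus. nra.
Qed.

Fixpoint psum (f : nat -> R) (J : nat) : R :=
  match J with O => 0 | S J' => psum f J' + f J' end.

Definition sq x n J := psum (fun j => dd x n j ^ 2) J.

Lemma sq_double x c n J : MidH x c -> (forall n j, c n j ^ 2 = / (4 * 2 ^ n)) ->
  (J <= 2 ^ n)%nat -> sq x (S n) (2 * J) = sq x n J / 2 + INR J / 2 ^ S n.
Proof.
  intros Hm Hc. assert (Hn := two_pow_pos n).
  change (2 ^ S n) with (2 * 2 ^ n).
  induction J as [|J IH]; intros HJ.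
  - unfold sq. simpl. field. lra.
  - unfold sq in *. replace (2 * S J)%nat with (S (S (2 * J))) by lia.
    change (psum ?f (S (S ?a))) with (psum f a + f a + f (S a)).
    rewrite IH by lia.
    replace (S (2 * J)) with (2 * J + 1)%nat by lia.
    rewrite (d_even x c n J Hm) by lia. rewrite (d_odd x c n J Hm) by lia.
    rewrite S_INR. specialize (Hc n J).
    assert (Hsq : (dd x n J / 2 + c n J) ^ 2 + (dd x n J / 2 - c n J) ^ 2
      = dd x n J ^ 2 / 2 + 2 * / (4 * 2 ^ n)) by (rewrite <- Hc; field).
    rewrite Rplus_assoc, Hsq. simpl psum. field. lra.
Qed.

Lemma E_bound x c K : MidH x c -> (forall n j, c n j ^ 2 = / (4 * 2 ^ n)) ->
  6 <= K -> dd x 0 0 ^ 2 <= K ->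
  forall n J, (J <= 2 ^ n)%nat ->
  Rabs (sq x n J - INR J / 2 ^ n) <= (INR n + 1) * (K + 1) / 2 ^ n.
Proof.
  intros Hm Hc HK H0 n. induction n as [|n IH]; intros J HJ.
  - simpl in HJ. simpl pow.
    assert (0 <= dd x 0 0 ^ 2) by apply pow2_ge_0.
    destruct J as [|[|J]]; [| |lia]; unfold sq; simpl psum; simpl INR;
    apply Rabs_le; split; unfold Rdiv; rewrite ?Rinv_1; lra.
  - assert (Hn := two_pow_pos n).
    assert (HB : (INR (S n) + 1) * (K + 1) / 2 ^ S n =
                 (INR n + 1) * (K + 1) / 2 ^ n / 2 + (K + 1) / (2 * 2 ^ n))
      by (rewrite S_INR; change (2 ^ S n) with (2 * 2 ^ n); field; lra).
    rewrite HB.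
    set (Bn := (INR n + 1) * (K + 1) / 2 ^ n) in *.
    destruct (split2 J) as [i [-> | ->]].
    + assert (Hi : (i <= 2 ^ n)%nat) by (simpl in HJ; lia).
      rewrite (sq_double x c n i Hm Hc Hi). rewrite dy_double.
      specialize (IH i Hi). apply Rabs_le_between in IH.
      assert (0 < (K + 1) / (2 * 2 ^ n)) by (apply Rdiv_lt_0_compat; lra).
      apply Rabs_le.
      replace (sq x n i / 2 + INR i / 2 ^ S n - INR i / 2 ^ n)
        with ((sq x n i - INR i / 2 ^ n) / 2)
        by (change (2 ^ S n) with (2 * 2 ^ n); field; lra).
      lra.
    + assert (Hi : (i < 2 ^ n)%nat) by (simpl in HJ; lia).
      replace (2 * i + 1)%nat with (S (2 * i)) by lia.
      unfold sq. change (psum ?f (S ?a)) with (psum f a + f a). fold (sq x (S n) (2 * i)).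
      rewrite (sq_double x c n i Hm Hc) by lia.
      assert (Hd := d_bound x c K Hm Hc HK H0 (S n) (2 * i) ltac:(simpl; lia)).
      assert (0 <= dd x (S n) (2 * i) ^ 2) by apply pow2_ge_0.
      specialize (IH i ltac:(lia)). apply Rabs_le_between in IH.
      assert (E1 : K / 2 ^ S n <= (K + 1) / (2 * 2 ^ n)).
      { change (2 ^ S n) with (2 * 2 ^ n). unfold Rdiv.
        apply Rmult_le_compat_r; [left; apply Rinv_0_lt_compat|]; lra. }
      assert (E2 : / (2 * 2 ^ n) <= (K + 1) / (2 * 2 ^ n)).
      { unfold Rdiv. rewrite <- (Rmult_1_l (/ (2 * 2 ^ n))) at 1.
        apply Rmult_le_compat_r; [left; apply Rinv_0_lt_compat|]; lra. }
      assert (E3 : 0 < / (2 * 2 ^ n)) by (apply Rinv_0_lt_compat; lra).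
      apply Rabs_le.
      replace (sq x n i / 2 + INR i / 2 ^ S n + dd x (S n) (2 * i) ^ 2 - INR (S (2 * i)) / 2 ^ S n)
        with ((sq x n i - INR i / 2 ^ n) / 2 + dd x (S n) (2 * i) ^ 2 - / (2 * 2 ^ n))
        by (rewrite S_INR, mult_INR; change (2 ^ S n) with (2 * 2 ^ n); simpl (INR 2); field; lra).
      lra.
Qed.

Lemma prefix (cc f : nat -> R) t N : (forall i j, (i <= j)%nat -> cc i <= cc j) ->
  exists J, (J <= S N)%nat /\
    sum_f_R0 (fun i => if Rle_dec (cc i) t then f i else 0) N = psum f J /\
    (forall i, (i < J)%nat -> cc i <= t) /\ ((J <= N)%nat -> t < cc J).
Proof.
  intros Hmono. induction N as [|N IH].
  - simpl. destruct (Rle_dec (cc 0%nat) t) as [H|H].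
    + exists 1%nat. simpl. repeat split; try lia; try ring.
      intros i Hi. replace i with 0%nat by lia. exact H.
    + exists 0%nat. simpl. split; [lia|split; [reflexivity|split]].
      * intros; lia.
      * intros _. apply Rnot_le_lt. exact H.
  - destruct IH as [J [HJ [Hs [Hlt Hgt]]]].
    change (sum_f_R0 ?g (S N)) with (sum_f_R0 g N + g (S N)). cbv beta.
    destruct (Rle_dec (cc (S N)) t) as [H|H].
    + assert (J = S N).
      { destruct (Nat.eq_dec J (S N)); [assumption|].
        assert (t < cc J) by (apply Hgt; lia).
        assert (cc J <= cc (S N)) by (apply Hmono; lia). lra. }
      subst J. exists (S (S N)). repeat split; try lia.
      * rewrite Hs. reflexivity.
      * intros i Hi. assert (cc i <= cc (S N)) by (apply Hmono; lia). lra.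
    + exists J. repeat split; try lia.
      * rewrite Hs. ring.
      * exact Hlt.
      * intros HJ'. destruct (Nat.eq_dec J (S N)) as [->|]; [apply Rnot_le_lt; exact H|apply Hgt; lia].
Qed.

Lemma psum_ext (f g : nat -> R) J : (forall i, (i < J)%nat -> f i = g i) -> psum f J = psum g J.
Proof.
  induction J as [|J IH]; intros H; simpl; [reflexivity|].
  rewrite IH by (intros; apply H; lia). rewrite H by lia. reflexivity.
Qed.

Lemma INR_pow2 n : INR (2 ^ n) = 2 ^ n.
Proof. rewrite pow_INR. reflexivity. Qed.

Lemma qv_sq x n t : 0 <= t <= 1 -> exists J, (J <= 2 ^ n)%nat /\
  qv_n dyadic_pts dyadic_card x n t = sq x n J /\ Rabs (INR J / 2 ^ n - t) <= / 2 ^ n.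
Proof.
  intros Ht. unfold qv_n, dyadic_pts, dyadic_card.
  assert (Hn := two_pow_pos n).
  assert (Hmono : forall i j, (i <= j)%nat -> INR i / 2 ^ n <= INR j / 2 ^ n).
  { intros i j Hij. unfold Rdiv. apply Rmult_le_compat_r.
    - left; apply Rinv_0_lt_compat; lra.
    - apply le_INR; exact Hij. }
  destruct (prefix (fun i => INR i / 2 ^ n)
     (fun i => (x (INR (Nat.min (S i) (2 ^ n)) / 2 ^ n) - x (INR i / 2 ^ n)) ^ 2) t (2 ^ n) Hmono)
    as [J [HJ [Hs [Hlt Hgt]]]].
  rewrite Hs.
  assert (HJ0 : (1 <= J)%nat).
  { destruct J; [|lia]. assert (t < INR 0 / 2 ^ n) by (apply Hgt; lia).
    simpl in H. unfold Rdiv in H. rewrite Rmult_0_l in H. lra. }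
  assert (Hext : forall J0, (J0 <= 2 ^ n)%nat ->
     psum (fun i => (x (INR (Nat.min (S i) (2 ^ n)) / 2 ^ n) - x (INR i / 2 ^ n)) ^ 2) J0 = sq x n J0).
  { intros J0 HJ0'. unfold sq. apply psum_ext. intros i Hi.
    rewrite Nat.min_l by lia. reflexivity. }
  destruct (Nat.eq_dec J (S (2 ^ n))) as [->|HJn].
  - exists (2 ^ n)%nat. split; [lia|split].
    + change (psum ?f (S ?a)) with (psum f a + f a). cbv beta. rewrite Hext by lia. rewrite Nat.min_r by lia. rewrite Rminus_diag. simpl. ring.
    + assert (H1 : INR (2 ^ n) / 2 ^ n <= t) by (apply Hlt; lia).
      rewrite INR_pow2 in *. replace (2 ^ n / 2 ^ n) with 1 in * by (field; lra).
      replace (1 - t) with 0 by lra. rewrite Rabs_R0. left; apply Rinv_0_lt_compat; lra.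
  - exists J. split; [lia|split].
    + apply Hext. lia.
    + assert (H1 : INR (J - 1) / 2 ^ n <= t) by (apply Hlt; lia).
      assert (H2 : t < INR J / 2 ^ n) by (apply Hgt; lia).
      rewrite minus_INR in H1 by lia. simpl (INR 1) in H1.
      apply Rabs_le. split; [lra|].
      replace ((INR J - 1) / 2 ^ n) with (INR J / 2 ^ n - / 2 ^ n) in H1 by (field; lra).
      lra.
Qed.

Lemma sq_pow_bound n : (INR n + 1) ^ 2 <= 4 * 2 ^ n.
Proof.
  induction n as [|n IH].
  - simpl. lra.
  - rewrite S_INR. change (2 ^ S n) with (2 * 2 ^ n).
    destruct (le_lt_dec n 1) as [H|H].
    + destruct n as [|[|n]]; [simpl; lra|simpl; lra|lia].
    + assert (H2 : (2 <= n)%nat) by lia. apply le_INR in H2. simpl (INR 2) in H2. nra.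
Qed.

Lemma frac_bound a P : 0 < a -> 0 < P -> a ^ 2 <= 4 * P -> a / P <= 4 * / a.
Proof.
  intros Ha HP H. apply Rle_div_l; [lra|].
  assert (E : 4 * / a * P - a = (4 * P - a ^ 2) / a) by (field; lra).
  assert (0 <= (4 * P - a ^ 2) / a) by (apply Rdiv_le_0_compat; lra).
  lra.
Qed.

Lemma lim_inv_S : is_lim_seq (fun n => / INR (S n)) 0.
Proof.
  apply (is_lim_seq_incr_1 (fun n => / INR n) 0).
  replace (Finite 0) with (Rbar_inv p_infty) by reflexivity.
  apply is_lim_seq_inv; [apply is_lim_seq_INR|discriminate].
Qed.

Theorem proposition2p6 (x : R -> R) :
  in_X x -> has_cont_qv dyadic_pts dyadic_card x (fun t => t).
Proof.
  intros [Hcont [th [Hth Hu]]]. split.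
  2:{ intros t _ eps Heps. exists eps. split; [exact Heps|]. intros; exact H0. }
  intros t Ht.
  set (c := fun n j => th n j / sqrt (2 ^ n) / 2).
  assert (Hm : MidH x c) by (intros n j Hj; exact (x_mid x th n j Hu Hj)).
  assert (Hc : forall n j, c n j ^ 2 = / (4 * 2 ^ n)).
  { intros n j. unfold c. assert (Hn := two_pow_pos n).
    assert (Hs : 0 < sqrt (2 ^ n)) by (apply sqrt_lt_R0; lra).
    assert (Hth2 : th n j ^ 2 = 1) by (destruct (Hth n j) as [E|E]; rewrite E; ring).
    replace ((th n j / sqrt (2 ^ n) / 2) ^ 2) with (th n j ^ 2 / (sqrt (2 ^ n) ^ 2 * 4))
      by (field; lra).
    rewrite Hth2, pow2_sqrt by lra. field. lra. }
  set (K := Rmax 6 (dd x 0 0 ^ 2)).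
  assert (HK : 6 <= K) by apply Rmax_l.
  assert (H0 : dd x 0 0 ^ 2 <= K) by apply Rmax_r.
  set (g := fun n => 4 * (K + 2) * / INR (S n)).
  assert (Hb : forall n, Rabs (qv_n dyadic_pts dyadic_card x n t - t) <= g n).
  { intros n. destruct (qv_sq x n t Ht) as [J [HJ [Hq Ht']]].
    rewrite Hq. assert (Hn := two_pow_pos n).
    pose proof (E_bound x c K Hm Hc HK H0 n J HJ) as HE.
    assert (Ha : 0 < INR n + 1) by (pose proof (pos_INR n); lra).
    assert (Hf := frac_bound (INR n + 1) (2 ^ n) Ha Hn (sq_pow_bound n)).
    eapply Rle_trans.
    { replace (sq x n J - t) with ((sq x n J - INR J / 2 ^ n) + (INR J / 2 ^ n - t)) by ring.
      apply Rabs_triang. }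
    unfold g. rewrite S_INR.
    replace ((INR n + 1) * (K + 1) / 2 ^ n) with ((K + 1) * ((INR n + 1) / 2 ^ n)) in HE
      by (field; lra).
    assert (/ 2 ^ n <= (INR n + 1) / 2 ^ n).
    { unfold Rdiv. rewrite <- (Rmult_1_l (/ 2 ^ n)) at 1.
      apply Rmult_le_compat_r; [left; apply Rinv_0_lt_compat; lra|].
      pose proof (pos_INR n); lra. }
    assert (0 <= (INR n + 1) / 2 ^ n) by (apply Rdiv_le_0_compat; lra).
    assert (0 < / (INR n + 1)) by (apply Rinv_0_lt_compat; lra).
    nra. }
  apply (is_lim_seq_le_le (fun n => t - g n) _ (fun n => t + g n)).
  - intros n. specialize (Hb n). apply Rabs_le_between in Hb. lra.
  - assert (L : is_lim_seq g 0).
    { unfold g. replace 0 with (4 * (K + 2) * 0) by ring.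
      apply is_lim_seq_mult'; [apply is_lim_seq_const|apply lim_inv_S]. }
    assert (L2 := is_lim_seq_minus' _ _ _ _ (is_lim_seq_const t) L).
    rewrite Rminus_0_r in L2. exact L2.
  - assert (L : is_lim_seq g 0).
    { unfold g. replace 0 with (4 * (K + 2) * 0) by ring.
      apply is_lim_seq_mult'; [apply is_lim_seq_const|apply lim_inv_S]. }
    assert (L2 := is_lim_seq_plus' _ _ _ _ (is_lim_seq_const t) L).
    rewrite Rplus_0_r in L2. exact L2.
Qed.
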